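(* Let $\Omega$ be a finite set, $\phi:\mathbb{R}\to\mathbb{R}_{+}$ increasing, $c\in\mathbb{R}^{|\Omega|}_{+}$, $\sigma\ge0$, and $H_{\mathbb{B}}=\{(x,z)\in\{0,1\}^{|\Omega|}\times\mathbb{R}_{+}:\phi(\sigma+\sum_{i\in\Omega}c_ix_i)\le z\}$. Define $f_\sigma(\mathcal{S})=\phi(\sigma+\sum_{i\in\mathcal{S}}c_i)$ and $g_\sigma(\mathcal{S})=f_\sigma(\mathcal{S})-\phi(\sigma)$. Then for any $\gamma\in\Gamma(g_\sigma)$ the inequality $$-|\Omega|D[f_\sigma]+\sum_{s\in\Omega}\gamma_sx_s\le z-\phi(\sigma)$$ is valid for $\mathrm{conv}(H_{\mathbb{B}})$.
   Context: For a set function $h$ and permutation $\pi$ of $\Omega$, $\mathcal{S}^\pi_0=\emptyset$, $\mathcal{S}^\pi_k=\{\pi_1,\dots,\pi_k\}$; $\Gamma(h)=\{\gamma\in\mathbb{R}^{|\Omega|}:\exists$ permutation $\pi$ with $\gamma_{\pi_i}=h(\mathcal{S}^\pi_i)-h(\mathcal{S}^\pi_{i-1})$ for all $i\}$. $D[h]=\max\{h(\mathcal{A}\cup\mathcal{B}\cup\{s\})-h(\mathcal{A}\cup\mathcal{B})-h(\mathcal{A}\cup\{s\})+h(\mathcal{A}):\mathcal{A},\mathcal{B}\subseteq\Omega,s\in\Omega,|\mathcal{A}|\le|\Omega|-1\}$. *)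

(* Defs.v *)
From HB Require Import structures.
From mathcomp Require Import all_boot all_order all_algebra.
Set Implicit Arguments. Unset Strict Implicit. Unset Printing Implicit Defensive.
Import Order.TTheory GRing.Theory Num.Theory.
Local Open Scope ring_scope.

Section Defs.
Variables (R : realFieldType) (T : finType).

(* S^pi_k = {pi_1, ..., pi_k}; a permutation of Omega is an injective map
   from positions 'I_#|T| (0-based: position i is pi_{i+1}) to T. *)
Definition prefix (pi : 'I_#|T| -> T) (k : nat) : {set T} :=
  [set pi i | i : 'I_#|T| & (i < k)%N].

Definition in_Gamma (h : {set T} -> R) (gamma : T -> R) : Prop :=
  exists pi : 'I_#|T| -> T, injective pi /\
    forall i : 'I_#|T|, gamma (pi i) = h (prefix pi i.+1) - h (prefix pi i).

(* The default 0 of the big max is harmless: taking B = set0 shows the max is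
   >= 0 whenever Omega is nonempty. *)
Definition Dh (h : {set T} -> R) : R :=
  \big[Num.max/0]_(p : {set T} * {set T} * T | (#|p.1.1| <= #|T| - 1)%N)
    (h (p.1.1 :|: p.1.2 :|: [set p.2]) - h (p.1.1 :|: p.1.2)
     - h (p.1.1 :|: [set p.2]) + h p.1.1).

Definition f_sigma (phi : R -> R) (c : T -> R) (sigma : R) (S : {set T}) : R :=
  phi (sigma + \sum_(i in S) c i).

Definition g_sigma (phi : R -> R) (c : T -> R) (sigma : R) (S : {set T}) : R :=
  f_sigma phi c sigma S - phi sigma.

Definition H_B (phi : R -> R) (c : T -> R) (sigma : R) (x : T -> R) (z : R) : Prop :=
  (forall i, x i = 0 \/ x i = 1) /\ 0 <= z /\
  phi (sigma + \sum_(i : T) c i * x i) <= z.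

Definition conv (P : (T -> R) -> R -> Prop) (x : T -> R) (z : R) : Prop :=
  exists (n : nat) (lam : 'I_n -> R) (px : 'I_n -> T -> R) (pz : 'I_n -> R),
    (forall k, 0 <= lam k) /\ \sum_(k < n) lam k = 1 /\
    (forall k, P (px k) (pz k)) /\
    (forall i, x i = \sum_(k < n) lam k * px k i) /\
    z = \sum_(k < n) lam k * pz k.

End Defs.

(* Main.v *)
Require Import Defs.
From HB Require Import structures.
From mathcomp Require Import all_boot all_order all_algebra.
From mathcomp Require Import ring lra.
Import Order.TTheory GRing.Theory Num.Theory.
Local Open Scope ring_scope.

Set Implicit Arguments.
Section Aux.
Variables (R : realFieldType) (T : finType).
Variable (pi : 'I_#|T| -> T).
Hypothesis pi_inj : injective pi.

Lemma in_prefix y k : (y \in Defs.prefix pi k) = [exists i : 'I_#|T|, (i < k)%N && (y == pi i)].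
Proof.
apply/imsetP/existsP => [[i Hi ->]|[i /andP[Hi /eqP ->]]].
  by exists i; rewrite eqxx andbT; move: Hi; rewrite inE.
by exists i; rewrite // inE.
Qed.

Lemma prefix0 : Defs.prefix pi 0 = set0.
Proof.
apply/setP => y; rewrite in_prefix inE; apply/existsP => [[i]].
by rewrite ltn0.
Qed.

Lemma prefixS (k : 'I_#|T|) : Defs.prefix pi k.+1 = pi k |: Defs.prefix pi k.
Proof.
apply/setP => y; rewrite in_setU1 !in_prefix.
apply/existsP/idP => [[i /andP[Hi /eqP ->]]|/orP[/eqP ->|/existsP[i /andP[Hi Hy]]]].
- rewrite ltnS leq_eqVlt in Hi; case/orP: Hi => [/eqP Hik|Hik].
    by rewrite (_ : i = k) ?eqxx //; apply: val_inj.
  by apply/orP; right; apply/existsP; exists i; rewrite Hik eqxx.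
- by exists k; rewrite ltnSn eqxx.
- by exists i; rewrite Hy ltnS ltnW.
Qed.

Lemma notin_prefix (k : 'I_#|T|) : pi k \notin Defs.prefix pi k.
Proof.
rewrite in_prefix; apply/existsP => [[i /andP[Hi /eqP /pi_inj Hk]]].
by move: Hi; rewrite Hk ltnn.
Qed.

Lemma prefixT : Defs.prefix pi #|T| = setT.
Proof.
have bij : bijective pi by apply: inj_card_bij => //; rewrite card_ord.
case: bij => g _ gK.
apply/setP => y; rewrite inE in_prefix; apply/existsP; exists (g y).
by rewrite ltn_ord gK eqxx.
Qed.

Lemma sum_pi (F : T -> R) : \sum_(s : T) F s = \sum_(k : 'I_#|T|) F (pi k).
Proof.
have bij : bijective pi by apply: inj_card_bij => //; rewrite card_ord.
by rewrite (reindex pi) //; apply: onW_bij.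
Qed.

End Aux.

Lemma Dh_ge0 (R : realFieldType) (T : finType) (h : {set T} -> R) : 0 <= Dh h.
Proof.
rewrite /Dh; elim/big_rec: _ => // i x _ Hx.
by rewrite le_max Hx orbT.
Qed.

Lemma Dh_ge (R : realFieldType) (T : finType) (h : {set T} -> R) (A B : {set T}) (s : T) :
  (#|A| <= #|T| - 1)%N ->
  h (A :|: B :|: [set s]) - h (A :|: B) - h (A :|: [set s]) + h A <= Dh h.
Proof.
move=> HA; rewrite /Dh (bigD1 (A, B, s)) //=.
by rewrite le_max lexx.
Qed.

Theorem mainTheorem9 (R : realFieldType) (T : finType) (phi : R -> R)
  (c : T -> R) (sigma : R)
  (phi_incr : {homo phi : a b / a <= b})
  (phi_nonneg : forall t, 0 <= phi t)
  (c_nonneg : forall i, 0 <= c i)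
  (sigma_nonneg : 0 <= sigma)
  (gamma : T -> R) (hgamma : in_Gamma (g_sigma phi c sigma) gamma) :
  forall (x : T -> R) (z : R), conv (H_B phi c sigma) x z ->
    - (#|T|%:R * Dh (f_sigma phi c sigma)) + \sum_(s : T) gamma s * x s
      <= z - phi sigma.
Proof.
case: hgamma => pi [pi_inj Hg].
set f := f_sigma phi c sigma.
set D := Dh f.
set n := #|T|.
have f0 : f set0 = phi sigma by rewrite /f /f_sigma big_set0 addr0.
have point : forall x0 z0, H_B phi c sigma x0 z0 ->
    \sum_(s : T) gamma s * x0 s <= z0 - phi sigma + n%:R * D.
  move=> x0 z0 [H01 [_ Hz]].
  set S := [set i | x0 i == 1].
  have fS : f S <= z0.
    apply: le_trans Hz; rewrite /f /f_sigma le_eqVlt; apply/orP; left; apply/eqP; congr phi; congr (_ + _).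
    rewrite big_mkcond /=; apply: eq_bigr => i _; rewrite inE.
    by case: (H01 i) => ->; rewrite ?eqxx ?mulr1 ?mulr0 // eq_sym oner_eq0.
  pose F k := f (Defs.prefix pi k :&: S).
  have tel : \sum_(k < n) (F k.+1 - F k) = f S - phi sigma.
    rewrite -(big_mkord xpredT (fun k => F k.+1 - F k)) telescope_sumr //.
    by rewrite /F (prefixT pi_inj) prefix0 setTI set0I f0.
  rewrite (sum_pi _ pi_inj).
  apply: (@le_trans _ _ (\sum_(k < n) ((F k.+1 - F k) + D))); last first.
    rewrite big_split /= tel sumr_const card_ord mulr_natl.
    lra.
  apply: ler_sum => k _.
  have DG : 0 <= D := @Dh_ge0 R T f.
  case: (H01 (pi k)) => Hx.
    rewrite Hx mulr0.
    have -> : F k.+1 = F k.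
      rewrite /F prefixS setIUl (_ : [set pi k] :&: S = set0) ?set0U //.
      apply/setP => y; rewrite !inE; apply/andP => [[/eqP -> ]].
      by rewrite Hx eq_sym oner_eq0.
    by rewrite subrr add0r.
  rewrite Hx mulr1 Hg /g_sigma.
  have sk : pi k \in S by rewrite inE Hx.
  have Hd := @Dh_ge R T f (Defs.prefix pi k :&: S) (Defs.prefix pi k) (pi k).
  have e1 : Defs.prefix pi k :&: S :|: Defs.prefix pi k = Defs.prefix pi k.
    by apply/setUidPr; apply: subsetIl.
  rewrite e1 in Hd.
  have e2 : Defs.prefix pi k :|: [set pi k] = Defs.prefix pi k.+1.
    by rewrite prefixS setUC.
  have e3 : Defs.prefix pi k :&: S :|: [set pi k] = Defs.prefix pi k.+1 :&: S.
    rewrite prefixS setIUl setUC; congr (_ :|: _).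
    by apply/setP => y; rewrite !inE; case: eqP => [->|] //=; rewrite Hx eqxx.
  rewrite e2 e3 in Hd.
  have Hc : (#|Defs.prefix pi k :&: S| <= #|T| - 1)%N.
    rewrite subn1 -(cardsC1 (pi k)); apply: subset_leq_card.
    apply/subsetP => y; rewrite inE in_setC1 => /andP[Hy _].
    by apply/eqP => Ey; move: Hy; rewrite Ey (negbTE (notin_prefix pi_inj k)).
  have := Hd Hc; rewrite /F /f.
  set a := f_sigma _ _ _ (Defs.prefix pi k.+1).
  set b := f_sigma _ _ _ (Defs.prefix pi k).
  set a' := f_sigma _ _ _ (Defs.prefix pi k.+1 :&: S).
  set b' := f_sigma _ _ _ (Defs.prefix pi k :&: S).
  move=> H.
  have -> : a - phi sigma - (b - phi sigma) = (a' - b') + (a - b - a' + b').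
    ring.
  by rewrite lerD2l.
move=> x z [m [lam [px [pz [Hl [Hs [HP [Hx Hz]]]]]]]].
have -> : \sum_(s : T) gamma s * x s = \sum_(k < m) lam k * \sum_(s : T) gamma s * px k s.
  under eq_bigr => s _ do rewrite Hx mulr_sumr.
  rewrite exchange_big /=; apply: eq_bigr => k _.
  by rewrite mulr_sumr; apply: eq_bigr => s _; rewrite mulrCA.
have H2 : \sum_(k < m) lam k * \sum_(s : T) gamma s * px k s <=
          \sum_(k < m) lam k * (pz k + (n%:R * D - phi sigma)).
  apply: ler_sum => k _; apply: ler_wpM2l => //.
  have := point _ _ (HP k).
  lra.
have H3 : \sum_(k < m) lam k * (pz k + (n%:R * D - phi sigma)) = z + (n%:R * D - phi sigma).
  rewrite Hz; under eq_bigr => k _ do rewrite mulrDr.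
  by rewrite big_split /= -mulr_suml Hs mul1r.
rewrite H3 in H2.
lra.
Qed.
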